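(* Let $b(\lambda)=\frac14\lambda^4+\frac12p\lambda^2+q\lambda$ with $p<0$, $q\in\mathbb{R}$, let $b^*(\eta)=\sup_{\lambda}[\eta\lambda-b(\lambda)]$, and $A(x,r,\eta)=b(x)+b(r)-\eta(x+r)+2b^*(\eta)$. (1) If $x=\sqrt{-p}$, then for $\eta>q$, $A(x,x,\eta)\approx(\eta-q)^2(1+|\eta|)^{-2/3}$. (2) If $x=-\sqrt{-p}$, then for $\eta<q$, $A(x,x,\eta)\approx(\eta-q)^2(1+|\eta|)^{-2/3}$.
   Context: $X\approx Y$ means $cY\le X\le c^{-1}Y$ for some $c>0$ independent of $\eta$ (it may depend on $p,q$). *)

(* Defs.v *)
From mathcomp Require Import all_boot all_order all_algebra.
From mathcomp Require Import all_classical all_reals all_analysis.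
Set Implicit Arguments. Unset Strict Implicit. Unset Printing Implicit Defensive.
Import Order.TTheory GRing.Theory Num.Theory.
Local Open Scope classical_set_scope.
Local Open Scope ring_scope.

Definition bfun (R : realType) (p q l : R) : R :=
  l ^+ 4 / 4 + p * l ^+ 2 / 2 + q * l.

Definition bstar (R : realType) (p q eta : R) : R :=
  sup [set eta * l - bfun p q l | l in [set: R]].

Definition Afun (R : realType) (p q x r eta : R) : R :=
  bfun p q x + bfun p q r - eta * (x + r) + 2 * bstar p q eta.

Definition weight (R : realType) (q eta : R) : R :=
  (eta - q) ^+ 2 * powR (1 + `|eta|) (- (2 / 3)).

(* Main.v *)
Require Import Defs.
From mathcomp Require Import all_boot all_order all_algebra.
From mathcomp Require Import all_classical all_reals all_analysis.
Import Order.TTheory GRing.Theory Num.Theory.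
Local Open Scope ring_scope.
From mathcomp Require Import ring lra.

Lemma up_core (R : realType) (s d t Kq u : R) : 0 < s -> 0 < d -> 1 <= t -> 0 <= Kq ->
  t^+3 <= 1 + Kq + d -> d <= t^+3 + Kq ->
  (d * u - u^+2 * (u+2 * s)^+2/4) * t^+2 <= (4 + (1+Kq)^+2 / s^+2) * d^+2.
Proof.
move=> s0 d0 t1 K0 h1 h2.
have t0 : 0 < t by lra.
have s20 : 0 < s^+2 by rewrite exprn_gt0.
have hD : 0 <= (1+Kq)^+2 / s^+2 * d^+2.
  apply: mulr_ge0; last exact: sqr_ge0.
  by apply: divr_ge0; [exact: sqr_ge0| exact: ltW].
have ht2 : 0 <= t^+2 by rewrite sqr_ge0.
have hg : 0 <= u^+2 * (u+2 * s)^+2/4 by rewrite divr_ge0 // mulr_ge0 // sqr_ge0.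
have [u0|u0] := ltP u 0.
  have : (d * u - u^+2 * (u+2 * s)^+2/4) * t^+2 <= 0.
    apply: mulr_le0_ge0 => //. nra.
  have : 0 <= d^+2 by rewrite sqr_ge0.
  nra.
have g1 : u^+4/4 <= u^+2 * (u+2 * s)^+2/4.
  apply: ler_wpM2r; first by rewrite invr_ge0; lra.
  rewrite (_ : u^+4 = u^+2 * u^+2) ; last by ring.
  apply: ler_wpM2l; first exact: sqr_ge0.
  nra.
have g2 : s^+2 * u^+2 <= u^+2 * (u+2 * s)^+2/4.
  rewrite (_ : s^+2 * u^+2 = u^+2 * (2 * s)^+2 / 4); last by field.
  apply: ler_wpM2r; first by rewrite invr_ge0; lra.
  apply: ler_wpM2l; first by rewrite sqr_ge0.
  nra.
have [tc|tc] := leP (t^+3) (2 * (1+Kq)).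
  have tt : t <= t^+3 by nra.
  have t2 : t^+2 <= 4 * (1+Kq)^+2 by nra.
  have key : (d * u - s^+2 * u^+2) * (4 * s^+2) <= d^+2.
    have : 0 <= (2 * s^+2 * u - d)^+2 by rewrite sqr_ge0.
    nra.
  have key2 : d * u - s^+2 * u^+2 <= d^+2 / (4 * s^+2).
    by rewrite ler_pdivlMr //; nra.
  have e : (1+Kq)^+2 / s^+2 * d^+2 = (4 * (1+Kq)^+2) * (d^+2 / (4 * s^+2)).
    by field; lra.
  have hD2 : 0 <= d^+2 / (4 * s^+2) by rewrite divr_ge0 ?sqr_ge0 //; nra.
  have : (d * u - u^+2 * (u+2 * s)^+2/4) * t^+2 <= (d^+2 / (4 * s^+2)) * t^+2.
    rewrite ler_pM2r; first lra. by rewrite exprn_gt0.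
  have : (d^+2 / (4 * s^+2)) * t^+2 <= (d^+2 / (4 * s^+2)) * (4 * (1+Kq)^+2).
    by apply: ler_wpM2l.
  have : 0 <= d^+2 by rewrite sqr_ge0.
  nra.
have [ut|ut] := leP (u * t^+2) (4 * d).
  have : (d * u - u^+2 * (u+2 * s)^+2/4) * t^+2 <= d * (u * t^+2) by nra.
  have : 0 <= d * (u * t^+2) by rewrite mulr_ge0 // ?mulr_ge0 //; lra.
  nra.
have u2 : 2 * t < u.
  have : 2 * t^+3 < u * t^+2 by nra.
  have t2 : 0 < t^+2 by rewrite exprn_gt0.
  nra.
have u3 : 4 * d <= u^+3.
  have : 8 * t^+3 <= u^+3.
    have : (2 * t)^+3 <= u^+3 by rewrite lerXn2r ?nnegrE //; lra.
    lra.
  lra.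
have : d * u - u^+4/4 <= 0.
  rewrite (_ : u^+4 = u * u^+3); last by ring. nra.
have : 0 <= d^+2 by rewrite sqr_ge0.
nra.
Qed.

Lemma low_core (R : realType) (s v t Kq a : R) : 0 < s -> 0 <= v -> 1 <= t -> 0 <= Kq ->
  v <= (1+Kq) * t -> 0 < a -> a * (1+Kq+2 * s)^+2 = 1 ->
  a * v^+2 * t^+2/2 <= (v * t^+2) * (a * v) - (a * v)^+2 * (a * v+2 * s)^+2/4.
Proof.
move=> s0 v0 t1 K0 hv a0.
set L := 1+Kq+2 * s => aL.
have L1 : 1 <= L by rewrite /L; lra.
have a1 : a <= 1.
  have : 1 <= L^+2 by nra.
  nra.
have hb : a * v + 2 * s <= L * t.
  have : a * v <= v by nra.
  rewrite /L; nra.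
have hb0 : 0 <= a * v + 2 * s by nra.
have hsq : (a * v + 2 * s)^+2 <= (L * t)^+2 by rewrite lerXn2r ?nnegrE //; nra.
have hk : a * (a * v + 2 * s)^+2 <= t^+2.
  have : a * (a * v + 2 * s)^+2 <= a * (L * t)^+2 by rewrite ler_pM2l.
  move/le_trans; apply.
  by rewrite exprMn mulrA aL mul1r.
have hv2 : 0 <= a * v^+2 by apply: mulr_ge0; [lra| exact: sqr_ge0].
have : (a * v^+2) * (a * (a * v + 2 * s)^+2) <= (a * v^+2) * t^+2 by apply: ler_wpM2l.
nra.
Qed.

Lemma ident (R : realType) (p q eta s e l : R) : s^+2 = -p -> (e = 1 \/ e = -1) ->
  eta* l - bfun p q l = (eta * (e * s) - bfun p q (e * s)) + (e * (eta - q)) * (e* l - s)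
     - (e* l - s)^+2 * ((e* l-s)+2 * s)^+2/4.
Proof.
move=> hs he; have -> : p = - s^+2 by rewrite hs opprK.
by rewrite /bfun; case: he => ->; field.
Qed.

Lemma main_e (R : realType) (p q e : R) (hp : p < 0) (he : e = 1 \/ e = -1) :
  exists c : R, 0 < c /\ forall eta : R, 0 < e * (eta - q) ->
    c * weight q eta <= Afun p q (e * Num.sqrt (- p)) (e * Num.sqrt (- p)) eta
       <= c^-1 * weight q eta.
Proof.
set s := Num.sqrt (- p).
have s0 : 0 < s by rewrite sqrtr_gt0; lra.
have hs : s^+2 = -p by rewrite sqr_sqrtr //; lra.
have e2 : e * e = 1 by case: he => ->; ring.
set Kq := `|q|.
have K0 : 0 <= Kq by exact: normr_ge0.
set C := 4 + (1+Kq)^+2 / s^+2.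
have C0 : 0 <= C.
  rewrite /C; have : 0 <= (1+Kq)^+2 / s^+2 by apply: divr_ge0; apply: sqr_ge0.
  lra.
set L := 1+Kq+2 * s.
have L0 : 0 < L^+2 by rewrite exprn_gt0 // /L; lra.
set a := (L^+2)^-1.
have a0 : 0 < a by rewrite invr_gt0.
have aL : a * L^+2 = 1 by rewrite mulVf // lt0r_neq0.
exists (L^+2 + 2 * C)^-1; split; first by rewrite invr_gt0; lra.
move=> eta hd; set d := e * (eta - q) in hd.
have ha : 0 <= 1 + `|eta| by have := normr_ge0 eta; lra.
set t := (1 + `|eta|) `^ (3^-1).
have t0 : 0 <= t by exact: powR_ge0.
have t3 : t^+3 = 1 + `|eta|.
  by rewrite /t -powR_mulrn ?powR_ge0 // -powRrM mulVf ?powRr1 // pnatr_eq0.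
have t1 : 1 <= t.
  have : 1 <= t^+3 by rewrite t3; have := normr_ge0 eta; lra.
  nra.
have tp : 0 < t^+2 by rewrite exprn_gt0 //; lra.
have hw : weight q eta = d^+2 / t^+2.
  rewrite /weight /d exprMn (_ : e^+2 = 1); last by rewrite expr2.
  rewrite mul1r powRN; congr (_ * _^-1).
  by rewrite -powR_mulrn // -powRrM; congr powR; rewrite mulrC.
have hq1 := ler_norm q; have hq2 := ler_norm (-q); rewrite normrN in hq2.
have hn : `|eta| <= Kq + d /\ d <= `|eta| + Kq.
  have ne : `|e| = 1 by case: he => ->; rewrite ?normrN normr1.
  have deq : eta = q + e * d by rewrite /d mulrA e2 mul1r; ring.
  split.
    rewrite {1}deq; apply: le_trans (ler_normD _ _) _.
    by rewrite normrM ne mul1r (gtr0_norm hd).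
  apply: le_trans (ler_norm d) _; rewrite /d normrM ne mul1r.
  exact: ler_normB.
have h1 : t^+3 <= 1 + Kq + d by rewrite t3; lra.
have h2 : d <= t^+3 + Kq by rewrite t3; lra.
set S := [set eta * l - bfun p q l | l in [set: R]]%classic.
set M0 := eta * (e * s) - bfun p q (e * s).
have ub : ubound S (M0 + C * d^+2 / t^+2).
  move=> y [l _ <-]; rewrite (@ident R p q eta s e l hs he) -/M0 -/d.
  have := @up_core R s d t Kq (e * l - s) s0 hd t1 K0 h1 h2.
  rewrite -/C -ler_pdivlMr // mulrA => h. lra.
have supu : sup S <= M0 + C * d^+2 / t^+2.
  by apply: ge_sup => //; exists (eta * 0 - bfun p q 0); exists 0.
set v := d / t^+2.
have v0 : 0 <= v by rewrite /v divr_ge0 //; lra.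
have dv : d = v * t^+2 by rewrite /v divfK // lt0r_neq0.
have hv : v <= (1+Kq) * t.
  rewrite /v ler_pdivrMr //.
  have t31 : 1 <= t^+3 by rewrite t3; have := normr_ge0 eta; lra.
  have : Kq * 1 <= Kq * t^+3 by apply: ler_wpM2l.
  have -> : (1 + Kq) * t * t^+2 = t^+3 + Kq * t^+3 by ring.
  lra.
have lo := @low_core R s v t Kq a s0 v0 t1 K0 hv a0 aL.
set l0 := e * (s + a * v).
have el0 : e * l0 - s = a * v by rewrite /l0 mulrA e2; ring.
have supl : eta * l0 - bfun p q l0 <= sup S.
  apply: ub_le_sup; first by exists (M0 + C * d^+2 / t^+2).
  by exists l0.
rewrite (@ident R p q eta s e l0 hs he) -/M0 -/d el0 in supl.
rewrite -dv in lo.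
have hA : Afun p q (e * s) (e * s) eta = 2 * (sup S - M0).
  by rewrite /Afun /bstar -/S /M0; ring.
rewrite (_ : Afun _ _ _ _ _ = 2 * (sup S - M0)); last exact: hA.
rewrite hw.
have W : a * v^+2 * t^+2 / 2 = a * (d^+2 / t^+2) / 2.
  by rewrite dv; field; lra.
have Wp : 0 <= d^+2 / t^+2 by apply: divr_ge0; [exact: sqr_ge0| lra].
have ca : (L^+2 + 2 * C)^-1 <= a.
  rewrite /a lef_pV2 ?posrE //; lra.
rewrite invrK; apply/andP; split.
  have : (L^+2 + 2 * C)^-1 * (d^+2 / t^+2) <= a * (d^+2 / t^+2) by apply: ler_wpM2r.
  lra.
have : C * d^+2 / t^+2 = C * (d^+2 / t^+2) by rewrite [RHS]mulrA.
nra.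
Qed.

Theorem proposition6p3 (R : realType) (p q : R) (hp : p < 0) :
  (exists c : R, 0 < c /\
     forall eta : R, q < eta ->
       c * weight q eta <= Afun p q (Num.sqrt (- p)) (Num.sqrt (- p)) eta
       <= c^-1 * weight q eta)
  /\
  (exists c : R, 0 < c /\
     forall eta : R, eta < q ->
       c * weight q eta <= Afun p q (- Num.sqrt (- p)) (- Num.sqrt (- p)) eta
       <= c^-1 * weight q eta).
Proof.
split.
  have [c [c0 hc]] := @main_e R p q _ hp (or_introl erefl).
  exists c; split => // eta he; move: (hc eta); rewrite !mul1r; apply; lra.
have [c [c0 hc]] := @main_e R p q _ hp (or_intror erefl).
exists c; split => // eta he; move: (hc eta); rewrite !mulN1r; apply; lra.
Qed.
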